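(* Let $A,B\in\mathrm{SL}_2\mathbb{Z}_{\ge0}$ be noncommuting, well oriented, with $\mathrm{tr}(A)<\mathrm{tr}(B)$ and $\mathrm{tr}(AB)=\mathrm{tr}(B^2)$. Fix a (possibly empty) word $w$ and an integer $s\ge0$. Then: (1) $[wab(ab^2)^sab^4]<[wab^2(ab^2)^sab^3]$; (2) $[wab^4(ab^2)^sab]<[wab^3(ab^2)^sab^2]$, provided $w$ is empty or begins with $a$.
   Context: Words are finite strings over $\{a,b\}$; $\phi$ is the monoid homomorphism with $\phi(a)=A,\phi(b)=B$, and $[w]=\mathrm{tr}(\phi(w))$. Fixed points are for the Möbius action on $\partial\mathcal{H}=\mathbb{P}^1\mathbb{R}$; $\alpha^\pm$ ($\beta^\pm$) are the attracting/repelling fixed points of $A$ ($B$), both equal to the unique fixed point if parabolic. With $\partial\mathcal{H}$ cyclically ordered and $[\alpha,\beta]$ the closed counterclockwise interval from $\alpha$ to $\beta$, let $I^+=\{\alpha^+\}$ if $\alpha^+=\beta^+$, and otherwise the one of $[\alpha^+,\beta^+],[\beta^+,\alpha^+]$ mapped into itself by both $A$ and $B$ (if it exists); define $I^-$ likewise with $A^{-1},B^{-1},\alpha^-,\beta^-$. The pair is coherently oriented if both exist, and well oriented if $A,B$ is coherently oriented but $A,B^{-1}$ is not. *)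

(* Defs.v *)
From HB Require Import structures.
From mathcomp Require Import all_boot all_order all_algebra.
From mathcomp Require Import Rstruct.
From Stdlib Require Import Rdefinitions.

Set Implicit Arguments.
Unset Strict Implicit.
Unset Printing Implicit Defensive.

Import Order.TTheory GRing.Theory Num.Theory.
Local Open Scope ring_scope.

Definition SL2Znn (M : 'M[int]_2) : Prop :=
  \det M = 1 /\ (forall i j, 0 <= M i j).

Inductive letter := La | Lb.

Definition word := seq letter.

Definition phi (A B : 'M[int]_2) (w : word) : 'M[int]_2 :=
  foldr (fun l M => (match l with La => A | Lb => B end) *m M) 1%:M w.

Definition trw (A B : 'M[int]_2) (w : word) : int := \tr (phi A B w).

Definition wpow (u : word) (s : nat) : word := flatten (nseq s u).

(* The real projective line P^1 R = boundary of H.  A point is represented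
   by a nonzero column vector v = (x, y) in R^2 (standing for x / y, with
   y = 0 standing for infinity); a matrix M acts by the Moebius map,
   i.e. v |-> M *m v. *)
Definition realR := Rdefinitions.R.
Definition pt := 'cV[realR]_2.

Definition det2 (u v : pt) : realR := \det (row_mx u v).

Definition same_pt (u v : pt) : Prop := det2 u v = 0.

(* strict cyclic (counterclockwise = increasing on R u {oo}) order of
   three distinct points u, w, v *)
Definition cyc (u w v : pt) : Prop := 0 < det2 u w * det2 w v * det2 v u.

Definition in_ccw (u v w : pt) : Prop :=
  w != 0 /\ (same_pt w u \/ same_pt w v \/ cyc u w v).

Definition interval_inv (M : 'M[realR]_2) (u v : pt) : Prop :=
  forall w : pt, in_ccw u v w -> in_ccw u v (M *m w).

(* attracting / repelling fixed points: eigenvectors of eigenvalues of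
   absolute value >= 1 (resp. <= 1); for a parabolic matrix both are the
   unique fixed point *)
Definition attr_fix (M : 'M[realR]_2) (v : pt) : Prop :=
  v != 0 /\ exists l : realR, M *m v = l *: v /\ 1 <= `|l|.
Definition rep_fix (M : 'M[realR]_2) (v : pt) : Prop :=
  v != 0 /\ exists l : realR, M *m v = l *: v /\ `|l| <= 1.

(* the interval I (built from fixed points u of M and v of N) exists:
   either u = v (I = {u}) or one of [u,v], [v,u] is mapped into itself
   by both M and N *)
Definition I_exists (M N : 'M[realR]_2) (u v : pt) : Prop :=
  same_pt u v
  \/ (interval_inv M u v /\ interval_inv N u v)
  \/ (interval_inv M v u /\ interval_inv N v u).

Definition coherent (A B : 'M[realR]_2) : Prop :=
  (exists ap bp : pt, attr_fix A ap /\ attr_fix B bp /\ I_exists A B ap bp)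
  /\ (exists am bm : pt, rep_fix A am /\ rep_fix B bm /\
        I_exists (invmx A) (invmx B) am bm).

Definition toR (M : 'M[int]_2) : 'M[realR]_2 := map_mx (fun z : int => z%:~R) M.

Definition well_oriented (A B : 'M[int]_2) : Prop :=
  coherent (toR A) (toR B) /\ ~ coherent (toR A) (invmx (toR B)).

(* Main.v *)
(* Proof via Cayley-Hamilton reduction to span{I,A,B,AB}. *)
Require Import Defs.
From HB Require Import structures.
From mathcomp Require Import all_boot all_order all_algebra.
From mathcomp Require Import ring lra zify.
Set Implicit Arguments. Unset Strict Implicit. Unset Printing Implicit Defensive.
Import Order.TTheory GRing.Theory Num.Theory.
Local Open Scope ring_scope.

Lemma sum2 (R : nmodType) (F : 'I_2 -> R) : \sum_(i < 2) F i = F 0 + F 1.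
Proof. rewrite big_ord_recl big_ord1. congr (_ + F _). exact/val_inj. Qed.

Lemma det22 (M : 'M[int]_2) : \det M = M 0 0 * M 1 1 - M 0 1 * M 1 0.
Proof.
rewrite (expand_det_row _ ord0) sum2 /cofactor !det_mx11 !mxE /=.
have -> : lift ord0 (0:'I_1) = 1 :> 'I_2 by apply/val_inj.
have -> : lift (1:'I_2) (0:'I_1) = 0 :> 'I_2 by apply/val_inj.
rewrite expr0 expr1 /=. 
have -> : (ord0 : 'I_2) = 0 by apply/val_inj.
ring.
Qed.

Lemma tr22 (M : 'M[int]_2) : \tr M = M 0 0 + M 1 1.
Proof. by rewrite /mxtrace sum2. Qed.

Lemma mul22 (M N : 'M[int]_2) i j : (M *m N) i j = M i 0 * N 0 j + M i 1 * N 1 j.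
Proof. by rewrite mxE sum2. Qed.

Lemma ord2P (P : 'I_2 -> Prop) : P 0 -> P 1 -> forall i, P i.
Proof. move=> h0 h1 [[|[|//]] hi]. 
- by have -> : Ordinal hi = 0 by apply/val_inj.
- by have -> : Ordinal hi = 1 by apply/val_inj.
Qed.

Record quad := Q4 { q0 : int; q1 : int; q2 : int; q3 : int }.

Definition ev (A B : 'M[int]_2) (q : quad) : 'M[int]_2 :=
  q0 q *: 1%:M + q1 q *: A + q2 q *: B + q3 q *: (A *m B).

Definition stepA (dA x y z : int) (q : quad) : quad :=
  Q4 (- dA * q1 q + (z - x * y) * q2 q - dA * y * q3 q)
     (q0 q + x * q1 q + y * q2 q + z * q3 q)
     (x * q2 q + dA * q3 q) (- q2 q).
Definition stepB (dB y : int) (q : quad) : quad :=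
  Q4 (- dB * q2 q) (- dB * q3 q) (q0 q + y * q2 q) (q1 q + y * q3 q).

Ltac ent := apply/matrixP; apply: ord2P; apply: ord2P;
  rewrite ?tr22 ?det22 !mxE ?sum2 ?mxE ?sum2 ?mxE /=.

Lemma evA (A B : 'M[int]_2) q :
  ev A B q *m A = ev A B (stepA (\det A) (\tr A) (\tr B) (\tr (A *m B)) q).
Proof. rewrite /ev /stepA /=. ent. all: ring. Qed.

Lemma evB (A B : 'M[int]_2) q :
  ev A B q *m B = ev A B (stepB (\det B) (\tr B) q).
Proof. rewrite /ev /stepB /=. ent. all: ring. Qed.

Definition qsub (p q : quad) : quad := Q4 (q0 p - q0 q) (q1 p - q1 q) (q2 p - q2 q) (q3 p - q3 q).

Definition coef (dA dB x y z : int) (w : word) : quad :=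
  foldl (fun q l => match l with La => stepA dA x y z q | Lb => stepB dB y q end) (Q4 1 0 0 0) w.

Lemma phi_cat (A B : 'M[int]_2) u v : phi A B (u ++ v) = phi A B u *m phi A B v.
Proof. elim: u => [|l u IH] /=; first by rewrite mul1mx. by rewrite IH mulmxA. Qed.

Lemma phi_rcons (A B : 'M[int]_2) w l :
  phi A B (rcons w l) = phi A B w *m (match l with La => A | Lb => B end).
Proof. by rewrite -cats1 phi_cat /= mulmx1. Qed.

Lemma phi_coef (A B : 'M[int]_2) w :
  phi A B w = ev A B (coef (\det A) (\det B) (\tr A) (\tr B) (\tr (A *m B)) w).
Proof.
elim/last_ind: w => [|w l IH].
  by rewrite /= /ev /= scale1r !scale0r !addr0.
rewrite phi_rcons IH /coef foldl_rcons -/(coef _ _ _ _ _ w).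
by case: l; [rewrite evA | rewrite evB].
Qed.

Lemma ev_entry (A B : 'M[int]_2) q i j :
  ev A B q i j = q0 q * (i == j)%:R + q1 q * A i j + q2 q * B i j + q3 q * (A *m B) i j.
Proof. by rewrite /ev !mxE mulr_natr. Qed.

Lemma ev_sub (A B : 'M[int]_2) p q : ev A B (qsub p q) = ev A B p - ev A B q.
Proof. apply/matrixP => i j; rewrite ev_entry !mxE /=; ring. Qed.

Lemma tr_ev (A B : 'M[int]_2) q :
  \tr (ev A B q) = q0 q * 2 + q1 q * \tr A + q2 q * \tr B + q3 q * \tr (A *m B).
Proof. rewrite !tr22 !ev_entry /=; ring. Qed.

Lemma CH22 (M : 'M[int]_2) : M *m M = \tr M *: M - \det M *: 1%:M.
Proof. ent. all: ring. Qed.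

Definition nonneg (M : 'M[int]_2) := forall i j, 0 <= M i j.

Lemma phi_nonneg (A B : 'M[int]_2) w : nonneg A -> nonneg B -> nonneg (phi A B w).
Proof.
move=> hA hB; elim: w => [|l w IH] /=.
  by move=> i j; rewrite mxE; case: (i == j).
move=> i j; rewrite mul22; apply: addr_ge0; apply: mulr_ge0 => //; by case: l.
Qed.

Lemma phi_det (A B : 'M[int]_2) w : \det A = 1 -> \det B = 1 -> \det (phi A B w) = 1.
Proof.
move=> hA hB; elim: w => [|l w IH] /=; first by rewrite det1.
by rewrite det_mulmx IH mulr1; case: l.
Qed.

Lemma tr_pos (U N : 'M[int]_2) : nonneg U -> \det U = 1 -> (forall i j, 0 < N i j) ->
  0 < \tr (U *m N).
Proof.
move=> hU dU hN; rewrite tr22 !mul22; rewrite det22 in dU.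
have := hU 0 0; have := hU 0 1; have := hU 1 0; have := hU 1 1.
have := hN 0 0; have := hN 0 1; have := hN 1 0; have := hN 1 1.
nia.
Qed.

Lemma seq_pos (u : nat -> int) (c : int) : 2 <= c ->
  (forall s, u s.+2 = c * u s.+1 - u s) -> 0 < u 0 -> u 0 <= u 1 -> forall s, 0 < u s.
Proof.
move=> hc hr h0 h1.
have H : forall s, 0 < u s /\ u s <= u s.+1.
  elim => [|s [ha hb]]; first by [].
  split; first by apply: lt_le_trans hb.
  rewrite hr; nia.
by move=> s; case: (H s).
Qed.

Lemma ev_ge (A B : 'M[int]_2) q i j : nonneg A -> (forall i, 1 <= A i i) -> (forall i j, 1 <= B i j) ->
  0 <= q2 q -> 0 <= q3 q -> 0 <= q1 q + q3 q ->
  (if i == j then q0 q + q1 q + q2 q + q3 q else q2 q) <= ev A B q i j.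
Proof.
move=> hA hAd hB h2 h3 h13; rewrite ev_entry.
have hp : forall i j, A i j <= (A *m B) i j.
  move=> {hAd}; apply: ord2P; apply: ord2P; rewrite mul22;
  have := hA 0 0; have := hA 0 1; have := hA 1 0; have := hA 1 1;
  have := hB 0 0; have := hB 0 1; have := hB 1 0; have := hB 1 1; nia.
have hp' := hp i j; have ha := hA i j; have hb := hB i j.
have hpb : 0 <= q2 q * (B i j - 1) by apply: mulr_ge0 => //; rewrite subr_ge0.
have e0 : 0 <= (A *m B) i j by apply: le_trans hp'.
have [eij|nij] := eqVneq i j.
  subst j; rewrite mulr1n mulr1.
  have hai := hAd i.
  have e6 : 1 <= (A *m B) i i by apply: le_trans hp'.
  case: (lerP 0 (q1 q)) => hq1.
    have e1 : 0 <= q1 q * (A i i - 1) by apply: mulr_ge0 => //; rewrite subr_ge0.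
    have e2 : 0 <= q3 q * ((A *m B) i i - 1) by apply: mulr_ge0 => //; rewrite subr_ge0.
    nia.
  have e4 : 0 <= - q1 q * ((A *m B) i i - A i i) by apply: mulr_ge0; [rewrite oppr_ge0 ltW | rewrite subr_ge0].
  have e5 : 0 <= (q1 q + q3 q) * ((A *m B) i i - 1) by apply: mulr_ge0 => //; rewrite subr_ge0.
  nia.
rewrite mulr0n mulr0.
case: (lerP 0 (q1 q)) => hq1.
  have e1 : 0 <= q1 q * A i j by apply: mulr_ge0.
  have e2 : 0 <= q3 q * (A *m B) i j by apply: mulr_ge0.
  nia.
have e3 : 0 <= (q1 q + q3 q) * (A *m B) i j by apply: mulr_ge0.
have e4 : 0 <= - q1 q * ((A *m B) i j - A i j) by apply: mulr_ge0; [rewrite oppr_ge0 ltW | rewrite subr_ge0].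
nia.
Qed.

Definition W (s : nat) : word := wpow [:: La; Lb; Lb] s.
Definition Fw (A B : 'M[int]_2) (p q p' q' : word) (s : nat) : 'M[int]_2 :=
  phi A B (p ++ W s ++ q) - phi A B (p' ++ W s ++ q').

Lemma Fw_rec (A B : 'M[int]_2) p q p' q' s : \det A = 1 -> \det B = 1 ->
  Fw A B p q p' q' s.+2 =
  \tr (phi A B [:: La; Lb; Lb]) *: Fw A B p q p' q' s.+1 - Fw A B p q p' q' s.
Proof.
move=> dA dB; set C := phi A B [:: La; Lb; Lb].
have hW : forall t, phi A B (W t.+1) = C *m phi A B (W t).
  move=> t; rewrite /W.
  have -> : wpow [:: La; Lb; Lb] t.+1 = [:: La; Lb; Lb] ++ wpow [:: La; Lb; Lb] t by [].
  by rewrite phi_cat.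
have dC : \det C = 1 by apply: phi_det.
have hG : phi A B (W s.+2) = \tr C *: phi A B (W s.+1) - phi A B (W s).
  by rewrite !hW mulmxA CH22 dC scale1r mulmxBl mul1mx -scalemxAl.
rewrite /Fw !(phi_cat A B p) !(phi_cat A B p') !(phi_cat A B (W _)) hG.
set G1 := phi A B (W s.+1); set G0 := phi A B (W s).
rewrite !mulmxBl !mulmxBr -!scalemxAl -!scalemxAr.
apply/matrixP => i j; rewrite !mxE; ring.
Qed.

Lemma Fw_pos (A B : 'M[int]_2) p q p' q' : SL2Znn A -> SL2Znn B ->
  (forall i j, 0 < Fw A B p q p' q' 0 i j) ->
  (forall i j, Fw A B p q p' q' 0 i j <= Fw A B p q p' q' 1 i j) ->
  forall s i j, 0 < Fw A B p q p' q' s i j.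
Proof.
move=> [dA hA] [dB hB] h0 h1 s i j.
set C := phi A B [:: La; Lb; Lb].
have hc : 2 <= \tr C.
  have nC : nonneg C by apply: phi_nonneg.
  have dC : \det C = 1 by apply: phi_det.
  rewrite tr22; rewrite det22 in dC.
  have := nC 0 0; have := nC 0 1; have := nC 1 0; have := nC 1 1; nia.
apply: (@seq_pos (fun s => Fw A B p q p' q' s i j) (\tr C)) => //.
by move=> t /=; rewrite Fw_rec // !mxE.
Qed.

Lemma Fw_tr_pos (A B : 'M[int]_2) p q p' q' : SL2Znn A -> SL2Znn B ->
  0 < \tr (Fw A B p q p' q' 0) ->
  \tr (Fw A B p q p' q' 0) <= \tr (Fw A B p q p' q' 1) ->
  forall s, 0 < \tr (Fw A B p q p' q' s).
Proof.
move=> [dA hA] [dB hB] h0 h1 s.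
set C := phi A B [:: La; Lb; Lb].
have hc : 2 <= \tr C.
  have nC : nonneg C by apply: phi_nonneg.
  have dC : \det C = 1 by apply: phi_det.
  rewrite tr22; rewrite det22 in dC.
  have := nC 0 0; have := nC 0 1; have := nC 1 0; have := nC 1 1; nia.
apply: (@seq_pos (fun s => \tr (Fw A B p q p' q' s)) (\tr C)) => //.
by move=> t /=; rewrite Fw_rec // !tr22 !mxE; ring.
Qed.

Lemma gt0_eq (a b : int) : 0 < a -> a = b -> 0 < b.
Proof. by move=> h <-. Qed.

Lemma pos_add (a b : int) : 0 < a -> 0 <= b -> 0 < a + b.
Proof. move=> ha hb; lia. Qed.

Ltac nn := match goal with
 | |- is_true (0 <= _ + _) => apply: addr_ge0; nn
 | |- is_true (0 <= _ * _) => apply: mulr_ge0; nn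
 | |- is_true (0 <= _ ^+ _) => apply: exprn_ge0; nn
 | _ => first [assumption | lia]
end.

Definition posq (q : quad) :=
  0 < q2 q /\ 0 <= q3 q /\ 0 <= q1 q + q3 q /\ 0 < q0 q + q1 q + q2 q + q3 q.

Definition trq (x y z : int) (q : quad) := q0 q * 2 + q1 q * x + q2 q * y + q3 q * z.

Lemma ge0_eq (a b : int) : 0 < a -> a = b -> 0 <= b.
Proof. by move=> h <-; apply: ltW. Qed.

Lemma W0 : W 0 = [::]. Proof. by []. Qed.
Lemma W1 : W 1 = [:: La; Lb; Lb]. Proof. by []. Qed.

Lemma base_N10 (x y z : int) (m n : nat) : x = Posz m + 2 -> y = Posz m + Posz n + 3 -> z = y ^+ 2 - 2 ->
   posq (qsub (coef 1 1 x y z ([:: La; Lb; Lb] ++ W 0 ++ [:: La; Lb; Lb; Lb])) (coef 1 1 x y z ([:: La; Lb] ++ W 0 ++ [:: La; Lb; Lb; Lb; Lb]))).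
Proof.
move=> hx hy hz; rewrite /posq; rewrite ?W0 ?W1; cbn [cat coef foldl stepA stepB qsub q0 q1 q2 q3].
split; [|split; [|split]].
- apply: (@gt0_eq (7 + (6 * (Posz n) ^+ 1 + 1 * (Posz n) ^+ 2 + 6 * (Posz m) ^+ 1 + 2 * (Posz m) ^+ 1 * (Posz n) ^+ 1 + 1 * (Posz m) ^+ 2))); [exact: erefl | rewrite ?hz ?hx ?hy; ring].
- apply: (@ge0_eq (5 + (13 * (Posz n) ^+ 1 + 7 * (Posz n) ^+ 2 + 1 * (Posz n) ^+ 3 + 5 * (Posz m) ^+ 1 + 8 * (Posz m) ^+ 1 * (Posz n) ^+ 1 + 2 * (Posz m) ^+ 1 * (Posz n) ^+ 2 + 1 * (Posz m) ^+ 2 + 1 * (Posz m) ^+ 2 * (Posz n) ^+ 1))); [exact: erefl | rewrite ?hz ?hx ?hy; ring].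
- apply: (@ge0_eq (4 + (9 * (Posz n) ^+ 1 + 6 * (Posz n) ^+ 2 + 1 * (Posz n) ^+ 3 + 4 * (Posz m) ^+ 1 + 7 * (Posz m) ^+ 1 * (Posz n) ^+ 1 + 2 * (Posz m) ^+ 1 * (Posz n) ^+ 2 + 1 * (Posz m) ^+ 2 + 1 * (Posz m) ^+ 2 * (Posz n) ^+ 1))); [exact: erefl | rewrite ?hz ?hx ?hy; ring].
- apply: (@gt0_eq (8 + (14 * (Posz n) ^+ 1 + 7 * (Posz n) ^+ 2 + 1 * (Posz n) ^+ 3 + 9 * (Posz m) ^+ 1 + 9 * (Posz m) ^+ 1 * (Posz n) ^+ 1 + 2 * (Posz m) ^+ 1 * (Posz n) ^+ 2 + 2 * (Posz m) ^+ 2 + 1 * (Posz m) ^+ 2 * (Posz n) ^+ 1))); [exact: erefl | rewrite ?hz ?hx ?hy; ring].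
Qed.

Lemma base_D1 (x y z : int) (m n : nat) : x = Posz m + 2 -> y = Posz m + Posz n + 3 -> z = y ^+ 2 - 2 ->
   posq (qsub (qsub (coef 1 1 x y z ([:: La; Lb; Lb] ++ W 1 ++ [:: La; Lb; Lb; Lb])) (coef 1 1 x y z ([:: La; Lb] ++ W 1 ++ [:: La; Lb; Lb; Lb; Lb]))) (qsub (coef 1 1 x y z ([:: La; Lb; Lb] ++ W 0 ++ [:: La; Lb; Lb; Lb])) (coef 1 1 x y z ([:: La; Lb] ++ W 0 ++ [:: La; Lb; Lb; Lb; Lb])))).
Proof.
move=> hx hy hz; rewrite /posq; rewrite ?W0 ?W1; cbn [cat coef foldl stepA stepB qsub q0 q1 q2 q3].
split; [|split; [|split]].
- apply: (@gt0_eq (126 + (283 * (Posz n) ^+ 1 + 231 * (Posz n) ^+ 2 + 86 * (Posz n) ^+ 3 + 15 * (Posz n) ^+ 4 + 1 * (Posz n) ^+ 5 + 276 * (Posz m) ^+ 1 + 456 * (Posz m) ^+ 1 * (Posz n) ^+ 1 + 257 * (Posz m) ^+ 1 * (Posz n) ^+ 2 + 60 * (Posz m) ^+ 1 * (Posz n) ^+ 3 + 5 * (Posz m) ^+ 1 * (Posz n) ^+ 4 + 225 * (Posz m) ^+ 2 + 256 * (Posz m) ^+ 2 * (Posz n) ^+ 1 + 90 * (Posz m) ^+ 2 * (Posz n) ^+ 2 + 10 * (Posz m) ^+ 2 * (Posz n) ^+ 3 + 85 * (Posz m) ^+ 3 + 60 * (Posz m) ^+ 3 * (Posz n) ^+ 1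 + 10 * (Posz m) ^+ 3 * (Posz n) ^+ 2 + 15 * (Posz m) ^+ 4 + 5 * (Posz m) ^+ 4 * (Posz n) ^+ 1 + 1 * (Posz m) ^+ 5))); [exact: erefl | rewrite ?hz ?hx ?hy; ring].
- apply: (@ge0_eq (90 + (359 * (Posz n) ^+ 1 + 496 * (Posz n) ^+ 2 + 315 * (Posz n) ^+ 3 + 101 * (Posz n) ^+ 4 + 16 * (Posz n) ^+ 5 + 1 * (Posz n) ^+ 6 + 210 * (Posz m) ^+ 1 + 671 * (Posz m) ^+ 1 * (Posz n) ^+ 1 + 698 * (Posz m) ^+ 1 * (Posz n) ^+ 2 + 316 * (Posz m) ^+ 1 * (Posz n) ^+ 3 + 65 * (Posz m) ^+ 1 * (Posz n) ^+ 4 + 5 * (Posz m) ^+ 1 * (Posz n) ^+ 5 + 183 * (Posz m) ^+ 2 + 457 * (Posz m) ^+ 2 * (Posz n) ^+ 1 + 343 * (Posz m) ^+ 2 * (Posz n) ^+ 2 + 100 * (Posz m) ^+ 2 * (Posz n) ^+ 3 + 10 * (Posz m) ^+ 2 * (Posz n) ^+ 4 + 74 * (Posz m) ^+ 3 + 142 * (Posz m) ^+ 3 * (Posz n) ^+ 1 + 70 * (Posz m) ^+ 3 * (Posz n) ^+ 2 + 10 * (Posz m) ^+ 3 * (Posz n) ^+ 3 + 14 * (Posz m) ^+ 4 + 20 * (Posz m) ^+ 4 * (Posz n) ^+ 1 + 5 * (Posz m) ^+ 4 * (Posz n) ^+ 2 + 1 * (Posz m) ^+ 5 + 1 * (Posz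 m) ^+ 5 * (Posz n) ^+ 1))); [exact: erefl | rewrite ?hz ?hx ?hy; ring].
- apply: (@ge0_eq (72 + (262 * (Posz n) ^+ 1 + 369 * (Posz n) ^+ 2 + 253 * (Posz n) ^+ 3 + 88 * (Posz n) ^+ 4 + 15 * (Posz n) ^+ 5 + 1 * (Posz n) ^+ 6 + 168 * (Posz m) ^+ 1 + 514 * (Posz m) ^+ 1 * (Posz n) ^+ 1 + 565 * (Posz m) ^+ 1 * (Posz n) ^+ 2 + 276 * (Posz m) ^+ 1 * (Posz n) ^+ 3 + 61 * (Posz m) ^+ 1 * (Posz n) ^+ 4 + 5 * (Posz m) ^+ 1 * (Posz n) ^+ 5 + 150 * (Posz m) ^+ 2 + 376 * (Posz m) ^+ 2 * (Posz n) ^+ 1 + 301 * (Posz m) ^+ 2 * (Posz n) ^+ 2 + 94 * (Posz m) ^+ 2 * (Posz n) ^+ 3 + 10 * (Posz m) ^+ 2 * (Posz n) ^+ 4 + 64 * (Posz m) ^+ 3 + 126 * (Posz m) ^+ 3 * (Posz n) ^+ 1 + 66 * (Posz m) ^+ 3 * (Posz n) ^+ 2 + 10 * (Posz m) ^+ 3 * (Posz n) ^+ 3 + 13 * (Posz m) ^+ 4 + 19 * (Posz m) ^+ 4 * (Posz n) ^+ 1 + 5 * (Posz m) ^+ 4 * (Posz n) ^+ 2 + 1 * (Posz m) ^+ 5 + 1 * (Posz m) ^+ 5 * (Posz n) ^+ 1))); [exact: erefl | rewrite ?hz ?hx ?hy; ring].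
- apply: (@gt0_eq (144 + (452 * (Posz n) ^+ 1 + 548 * (Posz n) ^+ 2 + 327 * (Posz n) ^+ 3 + 102 * (Posz n) ^+ 4 + 16 * (Posz n) ^+ 5 + 1 * (Posz n) ^+ 6 + 354 * (Posz m) ^+ 1 + 867 * (Posz m) ^+ 1 * (Posz n) ^+ 1 + 786 * (Posz m) ^+ 1 * (Posz n) ^+ 2 + 332 * (Posz m) ^+ 1 * (Posz n) ^+ 3 + 66 * (Posz m) ^+ 1 * (Posz n) ^+ 4 + 5 * (Posz m) ^+ 1 * (Posz n) ^+ 5 + 324 * (Posz m) ^+ 2 + 596 * (Posz m) ^+ 2 * (Posz n) ^+ 1 + 385 * (Posz m) ^+ 2 * (Posz n) ^+ 2 + 104 * (Posz m) ^+ 2 * (Posz n) ^+ 3 + 10 * (Posz m) ^+ 2 * (Posz n) ^+ 4 + 137 * (Posz m) ^+ 3 + 182 * (Posz m) ^+ 3 * (Posz n) ^+ 1 + 76 * (Posz m) ^+ 3 * (Posz n) ^+ 2 + 10 * (Posz m) ^+ 3 * (Posz n) ^+ 3 + 27 * (Posz m) ^+ 4 + 24 * (Posz m) ^+ 4 * (Posz n) ^+ 1 + 5 * (Posz m) ^+ 4 * (Posz n) ^+ 2 + 2 * (Posz m) ^+ 5 + 1 * (Posz m) ^+ 5 * (Posz n) ^+ 1))); [exact: erefl | rewrite ?hz ?hx ?hy; ring].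
Qed.

Lemma base_Z0A (x y z : int) (m n : nat) : x = Posz m + 2 -> y = Posz m + Posz n + 3 -> z = y ^+ 2 - 2 ->
   posq (qsub (coef 1 1 x y z ([:: La; Lb; Lb; Lb] ++ W 0 ++ [:: La; Lb; Lb; La])) (coef 1 1 x y z ([:: La; Lb; Lb; Lb; Lb] ++ W 0 ++ [:: La; Lb; La]))).
Proof.
move=> hx hy hz; rewrite /posq; rewrite ?W0 ?W1; cbn [cat coef foldl stepA stepB qsub q0 q1 q2 q3].
split; [|split; [|split]].
- apply: (@gt0_eq (5 + (13 * (Posz n) ^+ 1 + 7 * (Posz n) ^+ 2 + 1 * (Posz n) ^+ 3 + 5 * (Posz m) ^+ 1 + 8 * (Posz m) ^+ 1 * (Posz n) ^+ 1 + 2 * (Posz m) ^+ 1 * (Posz n) ^+ 2 + 1 * (Posz m) ^+ 2 + 1 * (Posz m) ^+ 2 * (Posz n) ^+ 1))); [exact: erefl | rewrite ?hz ?hx ?hy; ring].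
- apply: (@ge0_eq (7 + (6 * (Posz n) ^+ 1 + 1 * (Posz n) ^+ 2 + 6 * (Posz m) ^+ 1 + 2 * (Posz m) ^+ 1 * (Posz n) ^+ 1 + 1 * (Posz m) ^+ 2))); [exact: erefl | rewrite ?hz ?hx ?hy; ring].
- apply: (@ge0_eq (37 + (118 * (Posz n) ^+ 1 + 131 * (Posz n) ^+ 2 + 62 * (Posz n) ^+ 3 + 13 * (Posz n) ^+ 4 + 1 * (Posz n) ^+ 5 + 67 * (Posz m) ^+ 1 + 170 * (Posz m) ^+ 1 * (Posz n) ^+ 1 + 134 * (Posz m) ^+ 1 * (Posz n) ^+ 2 + 40 * (Posz m) ^+ 1 * (Posz n) ^+ 3 + 4 * (Posz m) ^+ 1 * (Posz n) ^+ 4 + 42 * (Posz m) ^+ 2 + 83 * (Posz m) ^+ 2 * (Posz n) ^+ 1 + 42 * (Posz m) ^+ 2 * (Posz n) ^+ 2 + 6 * (Posz m) ^+ 2 * (Posz n) ^+ 3 + 11 * (Posz m) ^+ 3 + 16 * (Posz m) ^+ 3 * (Posz n) ^+ 1 + 4 * (Posz m) ^+ 3 * (Posz n) ^+ 2 + 1 * (Posz m) ^+ 4 + 1 * (Posz m) ^+ 4 * (Posz n) ^+ 1))); [exact: erefl | rewrite ?hz ?hx ?hy; ring].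
- apply: (@gt0_eq (28 + (91 * (Posz n) ^+ 1 + 105 * (Posz n) ^+ 2 + 53 * (Posz n) ^+ 3 + 12 * (Posz n) ^+ 4 + 1 * (Posz n) ^+ 5 + 53 * (Posz m) ^+ 1 + 137 * (Posz m) ^+ 1 * (Posz n) ^+ 1 + 115 * (Posz m) ^+ 1 * (Posz n) ^+ 2 + 37 * (Posz m) ^+ 1 * (Posz n) ^+ 3 + 4 * (Posz m) ^+ 1 * (Posz n) ^+ 4 + 35 * (Posz m) ^+ 2 + 72 * (Posz m) ^+ 2 * (Posz n) ^+ 1 + 39 * (Posz m) ^+ 2 * (Posz n) ^+ 2 + 6 * (Posz m) ^+ 2 * (Posz n) ^+ 3 + 10 * (Posz m) ^+ 3 + 15 * (Posz m) ^+ 3 * (Posz n) ^+ 1 + 4 * (Posz m) ^+ 3 * (Posz n) ^+ 2 + 1 * (Posz m) ^+ 4 + 1 * (Posz m) ^+ 4 * (Posz n) ^+ 1))); [exact: erefl | rewrite ?hz ?hx ?hy; ring].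
Qed.

Lemma base_D2 (x y z : int) (m n : nat) : x = Posz m + 2 -> y = Posz m + Posz n + 3 -> z = y ^+ 2 - 2 ->
   posq (qsub (qsub (coef 1 1 x y z ([:: La; Lb; Lb; Lb] ++ W 1 ++ [:: La; Lb; Lb; La])) (coef 1 1 x y z ([:: La; Lb; Lb; Lb; Lb] ++ W 1 ++ [:: La; Lb; La]))) (qsub (coef 1 1 x y z ([:: La; Lb; Lb; Lb] ++ W 0 ++ [:: La; Lb; Lb; La])) (coef 1 1 x y z ([:: La; Lb; Lb; Lb; Lb] ++ W 0 ++ [:: La; Lb; La])))).
Proof.
move=> hx hy hz; rewrite /posq; rewrite ?W0 ?W1; cbn [cat coef foldl stepA stepB qsub q0 q1 q2 q3].
split; [|split; [|split]].
- apply: (@gt0_eq (90 + (359 * (Posz n) ^+ 1 + 496 * (Posz n) ^+ 2 + 315 * (Posz n) ^+ 3 + 101 * (Posz n) ^+ 4 + 16 * (Posz n) ^+ 5 + 1 * (Posz n) ^+ 6 + 210 * (Posz m) ^+ 1 + 671 * (Posz m) ^+ 1 * (Posz n) ^+ 1 + 698 * (Posz m) ^+ 1 * (Posz n) ^+ 2 + 316 * (Posz m) ^+ 1 * (Posz n) ^+ 3 + 65 * (Posz m) ^+ 1 * (Posz n) ^+ 4 + 5 * (Posz m) ^+ 1 * (Posz n) ^+ 5 + 183 * (Posz m) ^+ 2 + 457 * (Posz m) ^+ 2 * (Posz n) ^+ 1 + 343 * (Posz m) ^+ 2 * (Posz n) ^+ 2 + 100 * (Posz m) ^+ 2 * (Posz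 n) ^+ 3 + 10 * (Posz m) ^+ 2 * (Posz n) ^+ 4 + 74 * (Posz m) ^+ 3 + 142 * (Posz m) ^+ 3 * (Posz n) ^+ 1 + 70 * (Posz m) ^+ 3 * (Posz n) ^+ 2 + 10 * (Posz m) ^+ 3 * (Posz n) ^+ 3 + 14 * (Posz m) ^+ 4 + 20 * (Posz m) ^+ 4 * (Posz n) ^+ 1 + 5 * (Posz m) ^+ 4 * (Posz n) ^+ 2 + 1 * (Posz m) ^+ 5 + 1 * (Posz m) ^+ 5 * (Posz n) ^+ 1))); [exact: erefl | rewrite ?hz ?hx ?hy; ring].
- apply: (@ge0_eq (126 + (283 * (Posz n) ^+ 1 + 231 * (Posz n) ^+ 2 + 86 * (Posz n) ^+ 3 + 15 * (Posz n) ^+ 4 + 1 * (Posz n) ^+ 5 + 276 * (Posz m) ^+ 1 + 456 * (Posz m) ^+ 1 * (Posz n) ^+ 1 + 257 * (Posz m) ^+ 1 * (Posz n) ^+ 2 + 60 * (Posz m) ^+ 1 * (Posz n) ^+ 3 + 5 * (Posz m) ^+ 1 * (Posz n) ^+ 4 + 225 * (Posz m) ^+ 2 + 256 * (Posz m) ^+ 2 * (Posz n) ^+ 1 + 90 * (Posz m) ^+ 2 * (Posz n) ^+ 2 + 10 * (Posz m) ^+ 2 * (Posz n) ^+ 3 + 85 * (Posz m) ^+ 3 + 60 * (Posz m) ^+ 3 * (Posz n) ^+ 1 + 10 * (Posz m) ^+ 3 * (Posz n) ^+ 2 + 15 * (Posz m) ^+ 4 + 5 * (Posz m) ^+ 4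 * (Posz n) ^+ 1 + 1 * (Posz m) ^+ 5))); [exact: erefl | rewrite ?hz ?hx ?hy; ring].
- apply: (@ge0_eq (666 + (3049 * (Posz n) ^+ 1 + 5641 * (Posz n) ^+ 2 + 5490 * (Posz n) ^+ 3 + 3081 * (Posz n) ^+ 4 + 1032 * (Posz n) ^+ 5 + 204 * (Posz n) ^+ 6 + 22 * (Posz n) ^+ 7 + 1 * (Posz n) ^+ 8 + 2094 * (Posz m) ^+ 1 + 8233 * (Posz m) ^+ 1 * (Posz n) ^+ 1 + 12644 * (Posz m) ^+ 1 * (Posz n) ^+ 2 + 9867 * (Posz m) ^+ 1 * (Posz n) ^+ 3 + 4269 * (Posz m) ^+ 1 * (Posz n) ^+ 4 + 1038 * (Posz m) ^+ 1 * (Posz n) ^+ 5 + 133 * (Posz m) ^+ 1 * (Posz n) ^+ 6 + 7 * (Posz m) ^+ 1 * (Posz n) ^+ 7 + 2697 * (Posz m) ^+ 2 + 9003 * (Posz m) ^+ 2 * (Posz n) ^+ 1 + 11219 * (Posz m) ^+ 2 * (Posz n) ^+ 2 + 6780 * (Posz m) ^+ 2 * (Posz n) ^+ 3 + 2132 * (Posz m) ^+ 2 * (Posz n) ^+ 4 + 336 * (Posz m) ^+ 2 * (Posz n) ^+ 5 + 21 * (Posz m) ^+ 2 * (Posz n) ^+ 6 + 1846 * (Posz m) ^+ 3 + 5160 * (Posz m) ^+ 3 * (Posz n) ^+ 1 + 5046 * (Posz m) ^+ 3 * (Posz n) ^+ 2 + 2228 * (Posz m) ^+ 3 * (Posz n)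 ^+ 3 + 455 * (Posz m) ^+ 3 * (Posz n) ^+ 4 + 35 * (Posz m) ^+ 3 * (Posz n) ^+ 5 + 727 * (Posz m) ^+ 4 + 1668 * (Posz m) ^+ 4 * (Posz n) ^+ 1 + 1212 * (Posz m) ^+ 4 * (Posz n) ^+ 2 + 350 * (Posz m) ^+ 4 * (Posz n) ^+ 3 + 35 * (Posz m) ^+ 4 * (Posz n) ^+ 4 + 165 * (Posz m) ^+ 5 + 302 * (Posz m) ^+ 5 * (Posz n) ^+ 1 + 147 * (Posz m) ^+ 5 * (Posz n) ^+ 2 + 21 * (Posz m) ^+ 5 * (Posz n) ^+ 3 + 20 * (Posz m) ^+ 6 + 28 * (Posz m) ^+ 6 * (Posz n) ^+ 1 + 7 * (Posz m) ^+ 6 * (Posz n) ^+ 2 + 1 * (Posz m) ^+ 7 + 1 * (Posz m) ^+ 7 * (Posz n) ^+ 1))); [exact: erefl | rewrite ?hz ?hx ?hy; ring].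
- apply: (@gt0_eq (504 + (2338 * (Posz n) ^+ 1 + 4417 * (Posz n) ^+ 2 + 4426 * (Posz n) ^+ 3 + 2577 * (Posz n) ^+ 4 + 900 * (Posz n) ^+ 5 + 186 * (Posz n) ^+ 6 + 21 * (Posz n) ^+ 7 + 1 * (Posz n) ^+ 8 + 1626 * (Posz m) ^+ 1 + 6479 * (Posz m) ^+ 1 * (Posz n) ^+ 1 + 10214 * (Posz m) ^+ 1 * (Posz n) ^+ 2 + 8262 * (Posz m) ^+ 1 * (Posz n) ^+ 3 + 3726 * (Posz m) ^+ 1 * (Posz n) ^+ 4 + 947 * (Posz m) ^+ 1 * (Posz n) ^+ 5 + 127 * (Posz m) ^+ 1 * (Posz n) ^+ 6 + 7 * (Posz m) ^+ 1 * (Posz n) ^+ 7 + 2154 * (Posz m) ^+ 2 + 7316 * (Posz m) ^+ 2 * (Posz n) ^+ 1 + 9420 * (Posz m) ^+ 2 * (Posz n) ^+ 2 + 5927 * (Posz m) ^+ 2 * (Posz n) ^+ 3 + 1947 * (Posz m) ^+ 2 * (Posz n) ^+ 4 + 321 * (Posz m) ^+ 2 * (Posz n) ^+ 5 + 21 * (Posz m) ^+ 2 * (Posz n) ^+ 6 + 1525 * (Posz m) ^+ 3 + 4361 * (Posz m) ^+ 3 * (Posz n) ^+ 1 + 4425 * (Posz m) ^+ 3 * (Posz n) ^+ 2 + 2038 * (Posz m) ^+ 3 * (Posz n) ^+ 3 + 435 * (Posz m) ^+ 3 * (Posz n) ^+ 4 + 35 * (Posz m) ^+ 3 * (Posz n)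 ^+ 5 + 626 * (Posz m) ^+ 4 + 1473 * (Posz m) ^+ 4 * (Posz n) ^+ 1 + 1112 * (Posz m) ^+ 4 * (Posz n) ^+ 2 + 335 * (Posz m) ^+ 4 * (Posz n) ^+ 3 + 35 * (Posz m) ^+ 4 * (Posz n) ^+ 4 + 149 * (Posz m) ^+ 5 + 279 * (Posz m) ^+ 5 * (Posz n) ^+ 1 + 141 * (Posz m) ^+ 5 * (Posz n) ^+ 2 + 21 * (Posz m) ^+ 5 * (Posz n) ^+ 3 + 19 * (Posz m) ^+ 6 + 27 * (Posz m) ^+ 6 * (Posz n) ^+ 1 + 7 * (Posz m) ^+ 6 * (Posz n) ^+ 2 + 1 * (Posz m) ^+ 7 + 1 * (Posz m) ^+ 7 * (Posz n) ^+ 1))); [exact: erefl | rewrite ?hz ?hx ?hy; ring].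
Qed.

Lemma base_trZ0 (x y z : int) (m n : nat) : x = Posz m + 2 -> y = Posz m + Posz n + 3 -> z = y ^+ 2 - 2 ->
   0 < trq x y z (qsub (coef 1 1 x y z ([:: La; Lb; Lb; Lb] ++ W 0 ++ [:: La; Lb; Lb])) (coef 1 1 x y z ([:: La; Lb; Lb; Lb; Lb] ++ W 0 ++ [:: La; Lb]))).
Proof.
move=> hx hy hz; rewrite /trq; rewrite ?W0 ?W1; cbn [cat coef foldl stepA stepB qsub q0 q1 q2 q3].
apply: (@gt0_eq (48 + (136 * (Posz n) ^+ 1 + 139 * (Posz n) ^+ 2 + 63 * (Posz n) ^+ 3 + 13 * (Posz n) ^+ 4 + 1 * (Posz n) ^+ 5 + 85 * (Posz m) ^+ 1 + 186 * (Posz m) ^+ 1 * (Posz n) ^+ 1 + 137 * (Posz m) ^+ 1 * (Posz n) ^+ 2 + 40 * (Posz m) ^+ 1 * (Posz n) ^+ 3 + 4 * (Posz m) ^+ 1 * (Posz n) ^+ 4 + 50 * (Posz m) ^+ 2 + 86 * (Posz m) ^+ 2 * (Posz n) ^+ 1 + 42 * (Posz m) ^+ 2 * (Posz n) ^+ 2 + 6 * (Posz m) ^+ 2 * (Posz n) ^+ 3 + 12 * (Posz m) ^+ 3 + 16 * (Posz m) ^+ 3 * (Posz n) ^+ 1 + 4 * (Posz m) ^+ 3 * (Posz n) ^+ 2 + 1 * (Posz m) ^+ 4 + 1 * (Posz m) ^+ 4 * (Posz n) ^+ 1))); [exact: erefl | rewrite ?hz ?hx ?hy; ring].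
Qed.

Lemma base_trD (x y z : int) (m n : nat) : x = Posz m + 2 -> y = Posz m + Posz n + 3 -> z = y ^+ 2 - 2 ->
   0 < trq x y z (qsub (qsub (coef 1 1 x y z ([:: La; Lb; Lb; Lb] ++ W 1 ++ [:: La; Lb; Lb])) (coef 1 1 x y z ([:: La; Lb; Lb; Lb; Lb] ++ W 1 ++ [:: La; Lb]))) (qsub (coef 1 1 x y z ([:: La; Lb; Lb; Lb] ++ W 0 ++ [:: La; Lb; Lb])) (coef 1 1 x y z ([:: La; Lb; Lb; Lb; Lb] ++ W 0 ++ [:: La; Lb])))).
Proof.
move=> hx hy hz; rewrite /trq; rewrite ?W0 ?W1; cbn [cat coef foldl stepA stepB qsub q0 q1 q2 q3].
apply: (@gt0_eq (864 + (3648 * (Posz n) ^+ 1 + 6334 * (Posz n) ^+ 2 + 5881 * (Posz n) ^+ 3 + 3196 * (Posz n) ^+ 4 + 1049 * (Posz n) ^+ 5 + 205 * (Posz n) ^+ 6 + 22 * (Posz n) ^+ 7 + 1 * (Posz n) ^+ 8 + 2682 * (Posz m) ^+ 1 + 9601 * (Posz m) ^+ 1 * (Posz n) ^+ 1 + 13809 * (Posz m) ^+ 1 * (Posz n) ^+ 2 + 10326 * (Posz m) ^+ 1 * (Posz n) ^+ 3 + 4354 * (Posz m) ^+ 1 * (Posz n) ^+ 4 + 1044 * (Posz m) ^+ 1 * (Posz n) ^+ 5 + 133 * (Posz m) ^+ 1 * (Posz n) ^+ 6 + 7 * (Posz m) ^+ 1 * (Posz n) ^+ 7 + 3372 * (Posz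 m) ^+ 2 + 10160 * (Posz m) ^+ 2 * (Posz n) ^+ 1 + 11906 * (Posz m) ^+ 2 * (Posz n) ^+ 2 + 6950 * (Posz m) ^+ 2 * (Posz n) ^+ 3 + 2147 * (Posz m) ^+ 2 * (Posz n) ^+ 4 + 336 * (Posz m) ^+ 2 * (Posz n) ^+ 5 + 21 * (Posz m) ^+ 2 * (Posz n) ^+ 6 + 2229 * (Posz m) ^+ 3 + 5617 * (Posz m) ^+ 3 * (Posz n) ^+ 1 + 5216 * (Posz m) ^+ 3 * (Posz n) ^+ 2 + 2248 * (Posz m) ^+ 3 * (Posz n) ^+ 3 + 455 * (Posz m) ^+ 3 * (Posz n) ^+ 4 + 35 * (Posz m) ^+ 3 * (Posz n) ^+ 5 + 841 * (Posz m) ^+ 4 + 1753 * (Posz m) ^+ 4 * (Posz n) ^+ 1 + 1227 * (Posz m) ^+ 4 * (Posz n) ^+ 2 + 350 * (Posz m) ^+ 4 * (Posz n) ^+ 3 + 35 * (Posz m) ^+ 4 * (Posz n) ^+ 4 + 182 * (Posz m) ^+ 5 + 308 * (Posz m) ^+ 5 * (Posz n) ^+ 1 + 147 * (Posz m) ^+ 5 * (Posz n) ^+ 2 + 21 * (Posz m) ^+ 5 * (Posz n) ^+ 3 + 21 * (Posz m) ^+ 6 + 28 * (Posz m) ^+ 6 * (Posz n) ^+ 1 + 7 * (Posz m) ^+ 6 * (Posz n) ^+ 2 + 1 * (Posz m) ^+ 7 + 1 * (Posz m) ^+ 7 * (Posz n) ^+ 1))); [exact: erefl | rewrite ?hz ?hx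 ?hy; ring].
Qed.


Lemma mxsubE (M N : 'M[int]_2) i j : (M - N) i j = M i j - N i j.
Proof. by rewrite !mxE. Qed.

Lemma tr_sub (U P Q : 'M[int]_2) : \tr (U *m P) - \tr (U *m Q) = \tr (U *m (P - Q)).
Proof. rewrite !tr22 !mul22 !mxsubE; ring. Qed.

Lemma tr_sub0 (P Q : 'M[int]_2) : \tr P - \tr Q = \tr (P - Q).
Proof. by rewrite !tr22 !mxsubE; ring. Qed.

Lemma ev_pos (A B : 'M[int]_2) q i j : nonneg A -> (forall i, 1 <= A i i) -> (forall i j, 1 <= B i j) ->
  posq q -> 0 < ev A B q i j.
Proof.
move=> hA hAd hB [h2 [h3 [h13 hs]]].
apply: lt_le_trans (ev_ge i j hA hAd hB (ltW h2) h3 h13).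
by case: (i == j).
Qed.

Lemma phiA_r (A B : 'M[int]_2) r : phi A B r *m A = phi A B (r ++ [:: La]).
Proof. by rewrite phi_cat /= mulmx1. Qed.

Lemma tr_evq (A B : 'M[int]_2) q :
  \tr (ev A B q) = trq (\tr A) (\tr B) (\tr (A *m B)) q.
Proof. exact: tr_ev. Qed.

Lemma phi_consA (A B : 'M[int]_2) v : phi A B (La :: v) = A *m phi A B v.
Proof. by []. Qed.

Lemma tr_cyc (A U R : 'M[int]_2) : \tr (A *m (U *m R)) = \tr (U *m (R *m A)).
Proof. by rewrite mxtrace_mulC mulmxA. Qed.

Unset Implicit Arguments.

Theorem lemma6p2 (A B : 'M[int]_2) (w : word) (s : nat) :
  SL2Znn A -> SL2Znn B ->
  A *m B != B *m A ->
  well_oriented A B ->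
  \tr A < \tr B ->
  trw A B [:: La; Lb] = trw A B [:: Lb; Lb] ->
  (* (1) [w ab (ab^2)^s ab^4] < [w ab^2 (ab^2)^s ab^3] *)
  trw A B (w ++ [:: La; Lb] ++ wpow [:: La; Lb; Lb] s ++ [:: La; Lb; Lb; Lb; Lb])
    < trw A B (w ++ [:: La; Lb; Lb] ++ wpow [:: La; Lb; Lb] s ++ [:: La; Lb; Lb; Lb])
  /\
  (* (2) [w ab^4 (ab^2)^s ab] < [w ab^3 (ab^2)^s ab^2], if w is empty or begins with a *)
  ((w = [::] \/ exists w', w = La :: w') ->
   trw A B (w ++ [:: La; Lb; Lb; Lb; Lb] ++ wpow [:: La; Lb; Lb] s ++ [:: La; Lb])
     < trw A B (w ++ [:: La; Lb; Lb; Lb] ++ wpow [:: La; Lb; Lb] s ++ [:: La; Lb; Lb])).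
Proof.
move=> sA sB _ _ htr hzz.
have [dA nA] := sA; have [dB nB] := sB.
have dA' := dA; have dB' := dB.
rewrite det22 in dA'; rewrite det22 in dB'.
have hAd : forall i, 1 <= A i i.
  apply: ord2P; have := nA 0 0; have := nA 0 1; have := nA 1 0; have := nA 1 1; nia.
have hx2 : 2 <= \tr A.
  rewrite tr22; have := hAd 0; have := hAd 1; lia.
have hB1 : forall i j, 1 <= B i j.
  have h00 : 1 <= B 0 0 by have := nB 0 0; have := nB 0 1; have := nB 1 0; have := nB 1 1; nia.
  have h11 : 1 <= B 1 1 by have := nB 0 0; have := nB 0 1; have := nB 1 0; have := nB 1 1; nia.
  have hy : 3 <= B 0 0 + B 1 1 by rewrite -tr22; lia.
  have h01 : 1 <= B 0 1 by have := nB 0 1; have := nB 1 0; nia.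
  have h10 : 1 <= B 1 0 by have := nB 0 1; have := nB 1 0; nia.
  by apply: ord2P; apply: ord2P.
set x := \tr A; set y := \tr B; set z := \tr (A *m B).
have hz : z = y ^+ 2 - 2.
  move: hzz; rewrite /trw /= !mulmx1 -/z => ->.
  rewrite /y !tr22 !mul22; nia.
have [m hm] : exists m : nat, x = Posz m + 2.
  by exists (absz (x - 2)%R); rewrite gez0_abs; [ring | lia].
have [n hn] : exists n : nat, y = Posz m + Posz n + 3.
  by exists (absz (y - x - 1)%R); rewrite gez0_abs; [rewrite (_ : Posz m = x - 2); [ring | rewrite hm; ring] | lia].
have pc : forall v, phi A B v = ev A B (coef 1 1 x y z v).
  by move=> v; rewrite phi_coef dA dB.
have ep := fun q i j => @ev_pos A B q i j nA hAd hB1.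
pose F1 := Fw A B [:: La; Lb; Lb] [:: La; Lb; Lb; Lb] [:: La; Lb] [:: La; Lb; Lb; Lb; Lb].
have posF1 : forall s i j, 0 < F1 s i j.
  apply: (Fw_pos sA sB).
    move=> i j; rewrite /F1 /Fw !pc -ev_sub.
    apply: ep. exact: (@base_N10 _ _ _ _ _ hm hn hz).
  move=> i j; rewrite -subr_ge0 -mxsubE /F1 /Fw !pc -!ev_sub.
  by apply: ltW; apply: ep; exact: (@base_D1 _ _ _ _ _ hm hn hz).
pose F2 := Fw A B [:: La; Lb; Lb; Lb] [:: La; Lb; Lb] [:: La; Lb; Lb; Lb; Lb] [:: La; Lb].
have posF2 : forall s, 0 < \tr (F2 s).
  apply: (Fw_tr_pos sA sB).
    rewrite /F2 /Fw !pc -ev_sub tr_evq -/x -/y -/z.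
    exact: (@base_trZ0 _ _ _ _ _ hm hn hz).
  rewrite -subr_ge0 tr_sub0 /F2 /Fw !pc -!ev_sub tr_evq -/x -/y -/z.
  by apply: ltW; exact: (@base_trD _ _ _ _ _ hm hn hz).
pose F3 := Fw A B [:: La; Lb; Lb; Lb] [:: La; Lb; Lb; La] [:: La; Lb; Lb; Lb; Lb] [:: La; Lb; La].
have posF3 : forall s i j, 0 < F3 s i j.
  apply: (Fw_pos sA sB).
    move=> i j; rewrite /F3 /Fw !pc -ev_sub.
    by apply: ep; exact: (@base_Z0A _ _ _ _ _ hm hn hz).
  move=> i j; rewrite -subr_ge0 -mxsubE /F3 /Fw !pc -!ev_sub.
  by apply: ltW; apply: ep; exact: (@base_D2 _ _ _ _ _ hm hn hz).
split.
  rewrite /trw !(phi_cat A B w) -subr_gt0 tr_sub.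
  apply: tr_pos; [exact: phi_nonneg | exact: phi_det | rewrite -/(W s); exact: (posF1 s)].
case=> [->|[w' ->]].
  rewrite !cat0s /trw -subr_gt0 tr_sub0 -/(W s); exact: (posF2 s).
rewrite /trw (cat_cons La w') (cat_cons La w') !phi_consA !(phi_cat A B w') (tr_cyc A) (tr_cyc A) !phiA_r.
rewrite -subr_gt0 tr_sub.
apply: tr_pos; [exact: phi_nonneg | exact: phi_det | ].
rewrite -!catA -/(W s); exact: (posF3 s).
Qed.
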